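(* Let $N\ge1$, $K\ge1$, $n_v\ge0$. For a row-stochastic matrix $\mathbf{T}\in[0,1]^{K\times K}$ let $\mathbf{P}_{\mathbf{T}}\in[0,1]^{K^N\times K^N}$ denote the associated global transition matrix. Then the map $\mathbf{T}\mapsto\mathbf{P}_{\mathbf{T}}$, restricted to irreducible aperiodic row-stochastic matrices $\mathbf{T}$, is one-to-one. Furthermore, for such $\mathbf{T}$, let $\pi$ be the unique invariant measure of $\mathbf{P}_{\mathbf{T}}$, let $\tilde\pi$ be the unique invariant measure of $\mathbf{T}$, and for $n\in[N]$ let $\pi_n$ be the $n$-th marginal of $\pi$, i.e. $\pi_n(k)=\lim_{t\to\infty}\mathbb{P}(X_n(t)=k)$ for $k\in[K]$, where $X(\cdot)$ is the Markov chain with transition matrix $\mathbf{P}_{\mathbf{T}}$. Then $\pi_n=\tilde\pi$ for every $n\in[N]$.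
   Context: Vertices $[N]=\{1,\dots,N\}$ are arranged on a cycle; for $n\in[N]$, $V_n\subset[N]$ is the set of residues modulo $N$ of $n-n_v,\dots,n+n_v$, and $|V_n|$ its cardinality. The global transition matrix is $\mathbf{P}_{\mathbf{T}}(x,y)=\prod_{n=1}^N \frac{1}{|V_n|}\sum_{i\in V_n}\mathbf{T}_{x_i,y_n}$ for $x,y\in[K]^N$ (the transition matrix of the probabilistic cellular automaton with local transition matrix $\mathbf{T}$). *)

(* Defs.v *)
From mathcomp Require Import all_boot all_order all_algebra.
Set Implicit Arguments. Unset Strict Implicit. Unset Printing Implicit Defensive.
Import Order.TTheory GRing.Theory Num.Theory.
Local Open Scope ring_scope.

(* Vertices [N] are represented 0-based as 'I_N, states [K] as 'I_K. *)

Definition config (N K : nat) := {ffun 'I_N -> 'I_K}.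

(* V_n = residues mod N of n - nv, ..., n + nv; the residue of n + d - nv
   (d = 0..2nv) is computed as (n + N*nv + d - nv) mod N (no truncation
   happens since N >= 1 whenever 'I_N is inhabited). *)
Definition nbhd (N nv : nat) (n : 'I_N) : {set 'I_N} :=
  [set i : 'I_N | [exists d : 'I_(nv.*2.+1),
      val i == (n + N * nv + d - nv) %% N]%N].

Definition PT {R : numFieldType} (N K nv : nat) (T : 'M[R]_K)
  (x y : config N K) : R :=
  \prod_(n : 'I_N)
     ((#|nbhd nv n|%:R)^-1 * \sum_(i in nbhd nv n) T (x i) (y n)).

Definition row_stochastic {R : numDomainType} (K : nat) (T : 'M[R]_K) : Prop :=
  (forall i j, 0 <= T i j) /\ (forall i, \sum_j T i j = 1).

(* matrix powers T^m (defined by iteration so that any K is allowed) *)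
Definition mxpow {R : nzRingType} (K : nat) (T : 'M[R]_K) (m : nat) : 'M[R]_K :=
  iter m (fun A => A *m T) 1%:M.

Definition irreducible_mx {R : numDomainType} (K : nat) (T : 'M[R]_K) : Prop :=
  forall i j, exists m : nat, 0 < mxpow T m i j.

Definition aperiodic_mx {R : numDomainType} (K : nat) (T : 'M[R]_K) : Prop :=
  forall i, forall d : nat,
    (forall m : nat, (0 < m)%N -> 0 < mxpow T m i i -> (d %| m)%N) -> d = 1%N.

Definition invariant_measure {R : numDomainType} (S : finType)
  (P : S -> S -> R) (pi : S -> R) : Prop :=
  [/\ forall x, 0 <= pi x, \sum_x pi x = 1 &
      forall y, \sum_x pi x * P x y = pi y].

Definition marginal {R : nzRingType} (N K : nat) (pi : config N K -> R)
  (n : 'I_N) (k : 'I_K) : R :=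
  \sum_(x : config N K | x n == k) pi x.
Arguments PT {R} N K nv T x y.
Arguments marginal {R} {N K} pi n k.

(* Main.v *)
Require Import Defs.
From mathcomp Require Import all_boot all_order all_algebra.
From mathcomp Require Import ring lra.
Import Order.TTheory GRing.Theory Num.Theory.
Local Open Scope ring_scope.

Lemma nbhd_self N nv (n : 'I_N) : n \in nbhd nv n.
Proof.
rewrite inE; apply/existsP.
have H : (nv < nv.*2.+1)%N by rewrite ltnS -addnn leq_addr.
exists (Ordinal H) => /=.
by rewrite addnK addnC mulnC modnMDl modn_small.
Qed.

Lemma exists_max (R : realFieldType) (I : finType) (i0 : I) (g : I -> R) :
  exists j, forall i, g i <= g j.
Proof.
case: (@arg_maxP _ _ I i0 xpredT g) => // j _ H.
by exists j => i; apply: H.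
Qed.

Lemma mxpow_ge0 (R : realFieldType) K (T : 'M[R]_K) :
  (forall i j, 0 <= T i j) -> forall m i j, 0 <= mxpow T m i j.
Proof.
move=> Tnn; elim=> [|m IH] i j.
  by rewrite /mxpow /= mxE ler0n.
rewrite /mxpow iterS -/(mxpow T m) mxE; apply: sumr_ge0 => l _.
exact: mulr_ge0.
Qed.

Lemma supp_prop (R : realFieldType) K (T : 'M[R]_K) (w : 'I_K -> R) (s : R) :
  (forall i j, 0 <= T i j) -> irreducible_mx T -> 0 < s ->
  (forall a, 0 <= w a) ->
  (forall k, s * \sum_a w a * T a k <= w k) ->
  forall a k, 0 < w a -> 0 < w k.
Proof.
move=> Tnn Tirr s0 w0 Hw.
have key : forall m k, s ^+ m * \sum_a w a * mxpow T m a k <= w k.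
  elim=> [|m IH] k.
    rewrite expr0 mul1r (bigD1 k) //= big1 ?addr0.
      by rewrite /mxpow /= mxE eqxx mulr1.
    by move=> a /negbTE nak; rewrite /mxpow /= mxE nak mulr0.
  apply: le_trans (Hw k).
  have -> : s ^+ m.+1 * \sum_a w a * mxpow T m.+1 a k =
            s * \sum_b (s ^+ m * \sum_a w a * mxpow T m a b) * T b k.
    rewrite exprS -mulrA; congr (s * _).
    rewrite /mxpow iterS -/(mxpow T m).
    under eq_bigr do rewrite mxE big_distrr /=.
    rewrite exchange_big big_distrr /=; apply: eq_bigr => b _.
    rewrite -mulrA mulr_suml; congr (_ * _); apply: eq_bigr => a _.
    by rewrite mulrA.
  rewrite ler_pM2l //; apply: ler_sum => b _.
  by apply: ler_wpM2r => //; apply: IH.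
move=> a k wa.
have [m Hm] := Tirr a k.
apply: lt_le_trans (key m k).
rewrite mulr_gt0 ?exprn_gt0 //.
rewrite (bigD1 a) //=; apply: (@lt_le_trans _ _ (w a * mxpow T m a k)).
  exact: mulr_gt0.
rewrite lerDl; by apply: sumr_ge0 => i _; apply: mulr_ge0 => //; apply: mxpow_ge0.
Qed.

Lemma card_nbhd_neq0 (R : realFieldType) N nv (n : 'I_N) : (#|nbhd nv n|%:R : R) != 0.
Proof. by rewrite pnatr_eq0 -lt0n card_gt0; apply/set0Pn; exists n; exact: nbhd_self. Qed.

Lemma PT_const (R : realFieldType) N K nv (T : 'M[R]_K) a b :
  PT N K nv T [ffun=> a] [ffun=> b] = T a b ^+ N.
Proof.
rewrite /PT -[in RHS](card_ord N) -prodr_const; apply: eq_bigr => n _.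
under eq_bigr do rewrite !ffunE.
by rewrite sumr_const -[T a b *+ _]mulr_natl mulrA mulVf ?mul1r // card_nbhd_neq0.
Qed.

Lemma sum_PT (R : realFieldType) N K nv (T : 'M[R]_K) :
  (forall i, \sum_j T i j = 1) ->
  forall (x : config N K) n k,
  \sum_(y : config N K | y n == k) PT N K nv T x y =
  (#|nbhd nv n|%:R)^-1 * \sum_(i in nbhd nv n) T (x i) k.
Proof.
move=> Trow x n k.
pose F := fun (m : 'I_N) (j : 'I_K) =>
  (#|nbhd nv m|%:R : R)^-1 * (\sum_(i in nbhd nv m) T (x i) j) *
  (if m == n then (j == k)%:R else 1).
have H : \sum_(y : config N K | y n == k) PT N K nv T x y =
         \prod_(m : 'I_N) \sum_(j : 'I_K) F m j.
  rewrite bigA_distr_bigA big_mkcond /=; apply: eq_bigr => y _.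
  rewrite /F /= big_split /= [\prod_(i < N) (if _ then _ else _)](bigD1 n) //=.
  rewrite [X in _ * (_ * X)]big1 ?mulr1; last by move=> m /negbTE ->.
  rewrite eqxx /PT; case: (y n == k); by rewrite ?mulr1 ?mulr0.
rewrite H (bigD1 n) //= [X in _ * X]big1 ?mulr1.
  rewrite /F /= eqxx (bigD1 k) //= eqxx mulr1 [X in _ + X]big1 ?addr0 //.
  by move=> j /negbTE ->; rewrite mulr0.
move=> m /negbTE mn; rewrite /F /= mn.
under eq_bigr do rewrite mulr1.
rewrite -big_distrr /= exchange_big /=.
under eq_bigr do rewrite Trow.
by rewrite sumr_const -[1 *+ _]mulr_natl mulr1 mulVf // card_nbhd_neq0.
Qed.

Lemma norm_facts (R : realFieldType) (x : R) :
  [/\ 0 <= `|x| + x, 0 <= `|x| - x,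
      0 < `|x| + x -> 0 < x & 0 < `|x| - x -> x < 0].
Proof.
case: (lerP 0 x) => h.
  rewrite ger0_norm //; split; lra.
rewrite ltr0_norm //; split; lra.
Qed.
Arguments norm_facts {R}.

Lemma part2 (R : realFieldType) N K nv (T : 'M[R]_K) :
  row_stochastic T -> irreducible_mx T ->
  forall (pi : config N K -> R) (pit : 'I_K -> R),
  invariant_measure (PT N K nv T) pi ->
  invariant_measure (fun i j => T i j) pit ->
  forall n k, marginal pi n k = pit k.
Proof.
move=> [Tnn Trow] Tirr pi pit [pi0 pi1 piI] [_ pit1 pitI] n k.
pose c := fun m : 'I_N => (#|nbhd nv m|%:R : R).
have c0 : forall m, 0 < c m.
  by move=> m; rewrite ltr0n card_gt0; apply/set0Pn; exists m; exact: nbhd_self.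
pose mu := fun i a => marginal pi i a.
have inner : forall i j, \sum_a mu i a * T a j = \sum_x pi x * T (x i) j.
  move=> i j; rewrite /mu /marginal.
  rewrite [RHS](partition_big (fun x : config N K => x i) xpredT) //=.
  apply: eq_bigr => a _; rewrite big_distrl /=; apply: eq_bigr => x /eqP <-.
  done.
have muE : forall m j, mu m j = (c m)^-1 * \sum_(i in nbhd nv m) \sum_a mu i a * T a j.
  move=> m j.
  have -> : \sum_(i in nbhd nv m) \sum_a mu i a * T a j =
            \sum_(i in nbhd nv m) \sum_x pi x * T (x i) j.
    by apply: eq_bigr => i _; apply: inner.
  rewrite {1}/mu /marginal.
  under eq_bigr => y _ do rewrite -(piI y).
  rewrite exchange_big /=.
  under eq_bigr => x _ do rewrite -big_distrr /= sum_PT //.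
  rewrite exchange_big big_distrr /=; apply: eq_bigr => x _.
  by rewrite -big_distrr mulrCA.
pose nu := fun i a => mu i a - pit a.
have nuE : forall m j, nu m j = (c m)^-1 * \sum_(i in nbhd nv m) \sum_a nu i a * T a j.
  move=> m j.
  have E : \sum_(i in nbhd nv m) \sum_a nu i a * T a j =
     \sum_(i in nbhd nv m) (\sum_a mu i a * T a j) - \sum_(i in nbhd nv m) pit j.
    rewrite -sumrB; apply: eq_bigr => i _.
    by rewrite -(pitI j) -sumrB; apply: eq_bigr => a _; rewrite /nu mulrBl.
  rewrite E sumr_const mulrBr -[pit j *+ _]mulr_natl mulrA mulVf ?gt_eqF // mul1r.
  by rewrite /nu -muE.
have nusum : forall m, \sum_a nu m a = 0.
  move=> m; rewrite /nu sumrB pit1; apply/eqP; rewrite subr_eq0; apply/eqP; rewrite -pi1 /mu /marginal.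
  by rewrite [RHS](partition_big (fun x : config N K => x m) xpredT).
pose g := fun i => \sum_a `|nu i a|.
have [n0 Hn0] := @exists_max R _ n g.
pose r := fun j => (c n0)^-1 * \sum_(i in nbhd nv n0) \sum_a `|nu i a| * T a j.
have le1 : forall j, `|nu n0 j| <= r j.
  move=> j; rewrite nuE normrM ger0_norm; last by rewrite invr_ge0 ltW.
  rewrite /r ler_pM2l ?invr_gt0 //.
  apply: le_trans (ler_norm_sum _ _ _) _; apply: ler_sum => i _.
  apply: le_trans (ler_norm_sum _ _ _) _; apply: ler_sum => a _.
  by rewrite normrM (ger0_norm (Tnn a j)).
have sumr_le : \sum_j r j <= g n0.
  rewrite /r -big_distrr /= exchange_big /=.
  have -> : \sum_(i in nbhd nv n0) \sum_j \sum_a `|nu i a| * T a j =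
            \sum_(i in nbhd nv n0) g i.
    apply: eq_bigr => i _; rewrite exchange_big; apply: eq_bigr => a _.
    by rewrite -big_distrr /= Trow mulr1.
  rewrite -(ler_pM2l (c0 n0)) mulrA mulfV ?gt_eqF // mul1r.
  apply: le_trans (ler_sum _ (fun i _ => Hn0 i)) _.
  by rewrite sumr_const -mulr_natl.
have eq1 : forall j, `|nu n0 j| = r j.
  have S0 : \sum_j (r j - `|nu n0 j|) = 0.
    apply/eqP; rewrite eq_le sumr_ge0 ?andbT; last by move=> j _; rewrite subr_ge0.
    by rewrite sumrB subr_le0.
  move=> j; apply/eqP; rewrite eq_sym -subr_eq0; apply/eqP.
  by apply: (psumr_eq0P _ S0) => // i _; rewrite subr_ge0.
have key : forall e : R, (e = 1 \/ e = -1) -> forall j,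
    (c n0)^-1 * \sum_a (`|nu n0 a| + e * nu n0 a) * T a j <= `|nu n0 j| + e * nu n0 j.
  move=> e he j.
  have ge0 : forall x : R, 0 <= `|x| + e * x.
    by move=> x; have [? ? _ _] := norm_facts x; case: he => ->; rewrite ?mul1r ?mulN1r.
  rewrite eq1 (nuE n0 j) /r mulrCA -mulrDr ler_pM2l ?invr_gt0 //.
  have -> : \sum_(i in nbhd nv n0) \sum_a `|nu i a| * T a j +
      e * \sum_(i in nbhd nv n0) \sum_a nu i a * T a j =
      \sum_(i in nbhd nv n0) \sum_a (`|nu i a| + e * nu i a) * T a j.
    rewrite big_distrr -big_split; apply: eq_bigr => i _ /=.
    rewrite big_distrr -big_split; apply: eq_bigr => a _ /=.
    ring.
  rewrite (bigD1 n0) ?nbhd_self //= lerDl; apply: sumr_ge0 => i _.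
  by apply: sumr_ge0 => a _; apply: mulr_ge0.
have supp : forall e : R, (e = 1 \/ e = -1) -> forall a b,
    0 < `|nu n0 a| + e * nu n0 a -> 0 < `|nu n0 b| + e * nu n0 b.
  move=> e he.
  have s0 : 0 < (c n0)^-1 by rewrite invr_gt0.
  have w0 : forall x, 0 <= `|nu n0 x| + e * nu n0 x.
    by move=> x; have [? ? _ _] := norm_facts (nu n0 x); case: he => ->; rewrite ?mul1r ?mulN1r.
  have := @supp_prop R K T (fun x => `|nu n0 x| + e * nu n0 x) _ Tnn Tirr s0 w0 (key e he).
  by [].
have nz : forall j, nu n0 j = 0.
  move=> j; case: (ltrgtP (nu n0 j) 0) => // h; exfalso.
  - have H : forall b, 0 < `|nu n0 b| + (-1) * nu n0 b.
      move=> b; apply: (supp _ (or_intror erefl) j); rewrite mulN1r.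
      rewrite ltr0_norm //; lra.
    have S : \sum_b - nu n0 b = 0 by rewrite sumrN nusum oppr0.
    have P0 : forall b, xpredT b -> 0 <= - nu n0 b.
      move=> b _; have := H b; rewrite mulN1r; have [_ _ _ h4] := norm_facts (nu n0 b); move=> /h4 hb.
      by rewrite oppr_ge0 ltW.
    have := @psumr_eq0P _ _ xpredT (fun b => - nu n0 b) P0 S j isT.
    by move=> /eqP; rewrite oppr_eq0 lt_eqF.
  - have H : forall b, 0 < `|nu n0 b| + 1 * nu n0 b.
      move=> b; apply: (supp _ (or_introl erefl) j); rewrite mul1r.
      rewrite gtr0_norm //; lra.
    have P0 : forall b, xpredT b -> 0 <= nu n0 b.
      move=> b _; have := H b; rewrite mul1r; have [_ _ h3 _] := norm_facts (nu n0 b); move=> /h3 hb.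
      by rewrite ltW.
    have := @psumr_eq0P _ _ xpredT (fun b => nu n0 b) P0 (nusum n0) j isT.
    by move=> /eqP; rewrite gt_eqF.
have gn0 : g n0 = 0 by rewrite /g big1 // => a _; rewrite nz normr0.
have : `|nu n k| <= 0.
  rewrite -gn0; apply: (le_trans _ (Hn0 n)); rewrite /g (bigD1 k) //= lerDl.
  by apply: sumr_ge0 => a _.
rewrite normr_le0 /nu subr_eq0 => /eqP.
done.
Qed.

Theorem theorem3p2 (R : realFieldType) (N K nv : nat)
  (hN : (0 < N)%N) (hK : (0 < K)%N) :
  (forall T1 T2 : 'M[R]_K,
     row_stochastic T1 -> irreducible_mx T1 -> aperiodic_mx T1 ->
     row_stochastic T2 -> irreducible_mx T2 -> aperiodic_mx T2 ->
     PT N K nv T1 = PT N K nv T2 -> T1 = T2)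
  /\
  (forall T : 'M[R]_K,
     row_stochastic T -> irreducible_mx T -> aperiodic_mx T ->
     forall (pi : config N K -> R) (pit : 'I_K -> R),
       invariant_measure (PT N K nv T) pi ->
       invariant_measure (fun i j => T i j) pit ->
       forall (n : 'I_N) (k : 'I_K), marginal pi n k = pit k).
Proof.
split.
- move=> T1 T2 [T1nn _] _ _ [T2nn _] _ _ HP; apply/matrixP => a b.
  have := congr1 (fun P => P [ffun=> a] [ffun=> b]) HP; rewrite /= !PT_const => /eqP.
  by rewrite eqrXn2 // => /eqP.
- move=> T HT Tirr _ pi pit Hpi Hpit n k; exact: (@part2 R N K nv T HT Tirr pi pit Hpi Hpit n k).
Qed.
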